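(* The manifold with corners $M:=[0,\infty[$ does not admit a local addition in Michor's sense, i.e., there is no smooth map $\tau\colon {}^iTM\to M$ such that (A1) $(\tau,\pi_{TM})\colon{}^iTM\to M\times M$ is a diffeomorphism onto an open neighbourhood of the diagonal in $M\times M$, and (A2) $\tau(0_x)=x$ for all $x\in M$.
   Context: Identify $TM$ with $M\times\mathbb R$ and $\pi_{TM}(x,y)=x$. The set of inner tangent vectors is ${}^iTM=(\{0\}\times[0,\infty[)\cup(]0,\infty[\times\mathbb R)$ (the tangent vectors $\dot\gamma(0)$ of smooth curves $\gamma\colon[0,1[\,\to M$), a convex subset of $\mathbb R^2$ with dense interior; $0_x=(x,0)$. Smoothness on such sets: a map $f$ on a locally convex subset $U$ of $\mathbb R^m$ with dense interior is $C^1$ if it is continuous, $C^1$ on the interior, and its differential extends continuously to $U\times\mathbb R^m$; $C^k$ inductively; smooth means $C^k$ for all $k$. A diffeomorphism is a smooth bijection with smooth inverse. *)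

(* Defs.v *)
From mathcomp Require Import all_boot all_order all_algebra.
From mathcomp Require Import all_classical all_reals all_analysis.
Set Implicit Arguments. Unset Strict Implicit. Unset Printing Implicit Defensive.
Import Order.TTheory GRing.Theory Num.Theory.
Import numFieldNormedType.Exports.
Local Open Scope classical_set_scope.
Local Open Scope ring_scope.

Fixpoint Ck (R : realType) (k : nat) (V W : normedModType R)
  (U : set V) (f : V -> W) {struct k} : Prop :=
  match k with
  | 0%N => {within U, continuous f}
  | k'.+1 =>
      {within U, continuous f} /\
      (forall x, (U°) x -> differentiable f x) /\
      exists df : (V * V)%type -> W,
        (forall x v, (U°) x -> df (x, v) = 'd f x v) /\
        @Ck R k' _ W (U `*` setT) df
  end.

Definition smooth_on (R : realType) (V W : normedModType R)
  (U : set V) (f : V -> W) : Prop := forall k, @Ck R k V W U f.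

Definition diffeo_onto (R : realType) (V W : normedModType R)
  (U : set V) (O : set W) (f : V -> W) : Prop :=
  f @` U = O /\ smooth_on U f /\
  exists g : W -> V, g @` O `<=` U /\ smooth_on O g /\
    (forall x, U x -> g (f x) = x) /\ (forall y, O y -> f (g y) = y).

Definition Mset (R : realType) : set R := [set x | 0 <= x].

(* TM = M x R, tangent vectors (x,y) with base point x; inner tangent
   vectors iTM = ({0} x [0,oo[) u (]0,oo[ x R) *)
Definition iTM (R : realType) : set (R * R)%type :=
  [set p | (p.1 = 0 /\ 0 <= p.2) \/ 0 < p.1].

Definition piTM (R : realType) (p : (R * R)%type) : R := p.1.

Definition open_in_MxM (R : realType) (O : set (R * R)%type) : Prop :=
  exists G : set (R * R)%type, open G /\ O = G `&` (@Mset R `*` @Mset R).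

Definition local_addition (R : realType) (tau : (R * R)%type -> R) : Prop :=
  (forall p, @iTM R p -> @Mset R (tau p)) /\
  smooth_on (@iTM R) tau /\
  (exists O : set (R * R)%type,
      open_in_MxM O /\ (forall x, @Mset R x -> O (x, x)) /\
      diffeo_onto (@iTM R) O (fun p => (tau p, piTM p))) /\
  (forall x, @Mset R x -> tau (x, 0) = x).

(* Main.v *)
Require Import Defs.
From mathcomp Require Import all_boot all_order all_algebra.
From mathcomp Require Import all_classical all_reals all_analysis.
From mathcomp Require Import lra.
Import Order.TTheory GRing.Theory Num.Theory.
Import numFieldNormedType.Exports.
Local Open Scope classical_set_scope.
Local Open Scope ring_scope.

Theorem propositionA2 (R : realType) :
  ~ exists tau : (R * R)%type -> R, local_addition tau.
Proof.
move=> [tau [Hpos [Hsm [HO _]]]].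
case: HO => O [HOo [Odiag [fimg [_ [g [_ [_ [gf _]]]]]]]].
case: HOo => G [oG OE].
have [_ [Hdiff _]] := Hsm 1%N.
have G00 : G (0, 0).
  by have := Odiag 0 (lexx 0); rewrite OE => -[].
have nG : nbhs (0:R) [set y | G (0, y)].
  have nG2 : nbhs ((0:R), (0:R)) G by apply: open_nbhs_nbhs; split.
  have cp : (fun y : R => ((0:R), y)) @ (nbhs (0:R)) --> ((0:R), (0:R)).
    exact: (cvg_pair (cvg_cst (0:R)) cvg_id).
  exact: cp _ nG2.
have [e e0 He] := (nbhs_ballP _ _).1 nG.
set x := e / 2.
have x0 : 0 < x by rewrite /x divr_gt0.
have Ox : O (0, x).
  rewrite OE; split; first apply: He.
    by rewrite /ball /= sub0r normrN gtr0_norm // /x ltr_pdivrMr // ltr_pMr // ltr1n.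
  by split => /=; [exact: lexx | exact: ltW].
move: Ox; rewrite -fimg => -[[a v] _ /= [hv ha]].
rewrite /piTM /= in ha; subst a.
set h := fun t => tau (x, t).
have iT : forall t, @iTM R (x, t) by move=> t; right.
have intT : forall t, (@iTM R)° (x, t).
  move=> t; apply/nbhs_ballP; exists x => // q [/= h1 _]; right.
  move: h1; rewrite /ball /= ltr_distlC subrr; by case/andP.
have hc : continuous h.
  move=> t; have dc := differentiable_continuous (Hdiff _ (intT t)).
  have cp : (fun s => (x, s)) @ nbhs t --> (x, t).
    exact: (cvg_pair (cvg_cst x) cvg_id).
  exact: (cvg_comp _ _ cp dc).
have hinj : forall s t, h s = h t -> s = t.
  move=> s t hst.
  have := gf _ (iT s); have := gf _ (iT t); rewrite /piTM /= -/(h s) -/(h t) hst.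
  by move=> -> [].
have hge : forall t, 0 <= h t by move=> t; exact: (Hpos _ (iT t)).
have hv0 : h v = 0 by [].
have hneq : forall t, t != v -> 0 < h t.
  move=> t tv; rewrite lt0r hge andbT; apply/eqP => ht.
  by move/eqP: tv; apply; apply: hinj; rewrite ht hv0.
have vm : v - 1 != v by rewrite -subr_eq0 addrAC subrr sub0r oppr_eq0 oner_eq0.
have vp : v + 1 != v by rewrite -subr_eq0 addrAC subrr add0r oner_eq0.
have hm := hneq _ vm; have hp := hneq _ vp.
case: (leP (h (v - 1)) (h (v + 1))) => hle.
- have [c cI hc'] : exists2 c, c \in `[v, v + 1] & h c = h (v - 1).
    apply: IVT; first by rewrite lerDl.
      exact: continuous_subspaceT.
    by rewrite hv0 (min_l (hge _)) (max_r (hge _)) (ltW hm) hle.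
  have := hinj _ _ hc'; move: cI; rewrite in_itv /= => /andP[cv _] ce.
  by move: cv; rewrite ce; lra.
- have [c cI hc'] : exists2 c, c \in `[v - 1, v] & h c = h (v + 1).
    apply: IVT; first by rewrite lerBlDr lerDl.
      exact: continuous_subspaceT.
    by rewrite hv0 (min_r (hge _)) (max_l (hge _)) (ltW hp) (ltW hle).
  have := hinj _ _ hc'; move: cI; rewrite in_itv /= => /andP[_ cv] ce.
  by move: cv; rewrite ce; lra.
Qed.
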